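(* Let $d\le n$ be nonnegative integers and let $\mathcal P_d$ be the linear operator on functions $f:\{\pm1\}^n\to\mathbb R$ mapping $f=\sum_{\alpha\subseteq[n]}\hat f_\alpha\chi_\alpha$ to its low-degree part $\sum_{|\alpha|\le d}\hat f_\alpha\chi_\alpha$, where $\chi_\alpha(x)=\prod_{i\in\alpha}x_i$. Then $\textsf{Tensor-SDP}(\mathcal P_d)\le 9^d$.
   Context: A level-$r$ pseudo-expectation functional on polynomials in variables $y_1,\dots,y_N$ is a map $\tilde{\mathbb E}$ from real polynomials of degree at most $r$ to $\mathbb R$ that is linear, satisfies $\tilde{\mathbb E}[1]=1$, and satisfies $\tilde{\mathbb E}[P^2]\ge 0$ for every polynomial $P$ of degree at most $r/2$. For a linear operator $A$ from functions on a finite set $\mathcal U$ to functions on a finite set $\mathcal V$, $\textsf{Tensor-SDP}^{(r)}(A)$ is the maximum of $\tilde{\mathbb E}_f\|Af\|_4^4$ over level-$r$ pseudo-expectation functionals $\tilde{\mathbb E}$ on polynomials in the variables $\{f(u)\}_{u\in\mathcal U}$ satisfying $\tilde{\mathbb E}_f(\|f\|_2^2-1)^2=0$; here $\|g\|_p=(\mathbb E_{v}|g(v)|^p)^{1/p}$ is the expectation norm (uniform average), so $\|Af\|_4^4$ and $\|f\|_2^2$ are polynomials in the variables $f(u)$. $\textsf{Tensor-SDP}$ denotes $\textsf{Tensor-SDP}^{(4)}$. Expectations over $\{\pm1\}^n$ are with respect to the uniform distribution. *)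

(* Defs.v *)
From HB Require Import structures.
From mathcomp Require Import all_boot all_order all_algebra.
From mathcomp Require Import reals.
From mathcomp Require Import mpoly.
Set Implicit Arguments. Unset Strict Implicit. Unset Printing Implicit Defensive.
Import Order.TTheory GRing.Theory Num.Theory.
Local Open Scope ring_scope.

Section Defs.
Variable R : realType.

(* A point x of {+-1}^n is encoded by b : {ffun 'I_n -> bool}, with
   x_i = -1 if b i = true and x_i = 1 otherwise. *)
Definition cube (n : nat) := {ffun 'I_n -> bool}.

Definition coord {n : nat} (x : cube n) (i : 'I_n) : R :=
  if x i then -1 else 1.

Definition chi {n : nat} (alpha : {set 'I_n}) (x : cube n) : R :=
  \prod_(i in alpha) coord x i.

Definition fourier {n : nat} {W : lmodType R} (f : cube n -> W)
  (alpha : {set 'I_n}) : W :=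
  (#|cube n|%:R)^-1 *: \sum_(x : cube n) chi alpha x *: f x.

Definition lowdeg {n : nat} (d : nat) (f : cube n -> R) : cube n -> R :=
  fun x => \sum_(alpha : {set 'I_n} | (#|alpha| <= d)%N)
             @fourier n R^o f alpha * chi alpha x.

Definition fpoly (U : finType) := {mpoly R[#|U|]}.

Definition fvar {U : finType} (u : U) : fpoly U := 'X_(enum_rank u).

(* degree at most r  (msize p = 1 + total degree, or 0 when p = 0) *)
Definition deg_le {U : finType} (p : fpoly U) (r : nat) : bool :=
  (msize p <= r.+1)%N.

Definition pseudo_expectation {U : finType} (r : nat) (E : fpoly U -> R)
  : Prop :=
  [/\ (forall (c : R) (p q : fpoly U), deg_le p r -> deg_le q r ->
         E (c *: p + q) = c * E p + E q),
      E 1 = 1 &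
      (forall P : fpoly U, deg_le P r./2 -> 0 <= E (P * P))].

(* A linear operator A from functions on U to functions on V, applied to
   the formal function f (with f(u) the variable X_u):
   (A f)(v) = sum_u f(u) (A e_u)(v), with e_u the indicator of u. *)
Definition formal_apply {U V : finType} (A : (U -> R) -> (V -> R))
  : V -> fpoly U :=
  fun v => \sum_(u : U) (A (fun u' => (u' == u)%:R) v) *: fvar u.

Definition norm2sq {U : finType} : fpoly U :=
  (#|U|%:R)^-1 *: \sum_(u : U) fvar u ^+ 2.

Definition norm4pow4 {U V : finType} (A : (U -> R) -> (V -> R)) : fpoly U :=
  (#|V|%:R)^-1 *: \sum_(v : V) formal_apply A v ^+ 4.

(* the set of values of the Tensor-SDP^(r) program for A; Tensor-SDP^(r)(A)
   is the supremum (maximum) of this set. *)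
Definition tensor_sdp_value {U V : finType} (r : nat)
  (A : (U -> R) -> (V -> R)) (t : R) : Prop :=
  exists E : fpoly U -> R,
    [/\ pseudo_expectation r E,
        E ((norm2sq - 1) ^+ 2) = 0 &
        t = E (norm4pow4 A)].

End Defs.

(* Main.v *)
Require Import Defs.
From HB Require Import structures.
From mathcomp Require Import all_boot all_order all_algebra.
From mathcomp Require Import reals.
From mathcomp Require Import mpoly.
From mathcomp Require Import ring lra zify.
Import Order.TTheory GRing.Theory Num.Theory.
Local Open Scope ring_scope.
Set Implicit Arguments. Unset Strict Implicit. Unset Printing Implicit Defensive.

Section Deg.
Variable R : realType.
Variable U : finType.
Local Notation P := (fpoly R U).

Lemma deg_le0 k : deg_le (0 : P) k.
Proof. by rewrite /deg_le msize0. Qed.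

Lemma deg_leC (c : R) k : deg_le (c%:MP : P) k.
Proof. rewrite /deg_le msizeC; by case: (c != 0). Qed.

Lemma deg_le1 k : deg_le (1 : P) k.
Proof. by rewrite /deg_le msize1. Qed.

Lemma deg_leD (p q : P) k : deg_le p k -> deg_le q k -> deg_le (p + q) k.
Proof. rewrite /deg_le => hp hq; apply: leq_trans (msizeD_le _ _) _; by rewrite geq_max hp hq. Qed.

Lemma deg_leN (p : P) k : deg_le p k -> deg_le (- p) k.
Proof. by rewrite /deg_le msizeN. Qed.

Lemma deg_leB (p q : P) k : deg_le p k -> deg_le q k -> deg_le (p - q) k.
Proof. by move=> hp hq; apply: deg_leD => //; apply: deg_leN. Qed.

Lemma deg_leZ (c : R) (p : P) k : deg_le p k -> deg_le (c *: p) k.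
Proof. rewrite /deg_le => hp; exact: leq_trans (msizeZ_le _ _) hp. Qed.

Lemma deg_leMn (p : P) k m : deg_le p k -> deg_le (p *+ m) k.
Proof. move=> hp; rewrite -scaler_nat; exact: deg_leZ. Qed.

Lemma deg_leW (p : P) a b : (a <= b)%N -> deg_le p a -> deg_le p b.
Proof. rewrite /deg_le => hab hp; apply: leq_trans hp _; lia. Qed.

Lemma deg_leM (p q : P) a b : deg_le p a -> deg_le q b -> deg_le (p * q) (a + b).
Proof.
rewrite /deg_le => hp hq.
have [->|p0] := eqVneq p 0; first by rewrite mul0r msize0.
have [->|q0] := eqVneq q 0; first by rewrite mulr0 msize0.
rewrite msizeM // -subn1; move: (msize p) (msize q) hp hq => x y; lia.
Qed.

Lemma deg_leX (p : P) a m : deg_le p a -> deg_le (p ^+ m) (a * m).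
Proof.
move=> hp; elim: m => [|m ih]; first by rewrite expr0 deg_le1.
rewrite exprS mulnS; exact: deg_leM.
Qed.

Lemma deg_le_sum (I : Type) (s : seq I) (Pr : pred I) (F : I -> P) k :
  (forall i, Pr i -> deg_le (F i) k) -> deg_le (\sum_(i <- s | Pr i) F i) k.
Proof.
move=> h; apply: (big_ind (fun p => deg_le p k)) => //; [exact: deg_le0| move=> x y hx hy; exact: deg_leD].
Qed.

Lemma deg_fvar (u : U) : deg_le (fvar R u) 1.
Proof. by rewrite /deg_le /fvar msizeX mdeg1. Qed.

Definition sos2 (p : P) : Prop :=
  exists s : seq (R * P), all (fun cq => (0 <= cq.1) && deg_le cq.2 2) s /\
    p = \sum_(cq <- s) cq.1 *: cq.2 ^+ 2.

Lemma sos0 : sos2 0.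
Proof. by exists [::]; rewrite big_nil. Qed.

Lemma sosD p q : sos2 p -> sos2 q -> sos2 (p + q).
Proof.
move=> [s [hs ->]] [t [ht ->]]; exists (s ++ t); rewrite all_cat hs ht big_cat; split=> //.
Qed.

Lemma sosZ (c : R) p : 0 <= c -> sos2 p -> sos2 (c *: p).
Proof.
move=> c0 [s [hs ->]]; exists (map (fun cq => (c * cq.1, cq.2)) s); split.
  rewrite all_map; apply/allP => cq /(allP hs) /andP [h1 h2] /=; by rewrite mulr_ge0.
by rewrite big_map scaler_sumr; apply: eq_bigr => cq _; rewrite scalerA.
Qed.

Lemma sosMn p m : sos2 p -> sos2 (p *+ m).
Proof. move=> h; rewrite -scaler_nat; apply: sosZ => //; exact: ler0n. Qed.

Lemma sos_sq q : deg_le q 2 -> sos2 (q ^+ 2).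
Proof. move=> h; exists [:: (1, q)]; by rewrite big_seq1 scale1r /= ler01 h. Qed.

Lemma sos_sum (I : Type) (s : seq I) (Pr : pred I) (F : I -> P) :
  (forall i, Pr i -> sos2 (F i)) -> sos2 (\sum_(i <- s | Pr i) F i).
Proof. move=> h; apply: (big_ind sos2) => //; [exact: sos0 | move=> x y hx hy; exact: sosD]. Qed.

Lemma sos_eq p q : p = q -> sos2 q -> sos2 p.
Proof. by move=> ->. Qed.

Lemma sos_prod (I J : finType) (g : I -> P) (k : J -> P) :
  (forall x, deg_le (g x) 1) -> (forall y, deg_le (k y) 1) ->
  sos2 ((\sum_x g x ^+ 2) * (\sum_y k y ^+ 2)).
Proof.
move=> hg hk; rewrite mulr_suml; apply: sos_sum => x _; rewrite mulr_sumr.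
apply: sos_sum => y _; rewrite -exprMn; apply: sos_sq; exact: (deg_leM (hg x) (hk y)).
Qed.

Variable E : P -> R.
Hypothesis hE : pseudo_expectation 4 E.

Lemma E_lin (c : R) (p q : P) : deg_le p 4 -> deg_le q 4 -> E (c *: p + q) = c * E p + E q.
Proof. by case: hE => h _ _; apply: h. Qed.

Lemma E0 : E 0 = 0.
Proof.
have := @E_lin 1 0 0 (deg_le0 _) (deg_le0 _); rewrite scale1r addr0 mul1r => h.
have : E 0 + 0 = E 0 + E 0 by rewrite addr0 -h.
by move/addrI.
Qed.

Lemma EZ c p : deg_le p 4 -> E (c *: p) = c * E p.
Proof. by move=> h; have := @E_lin c p 0 h (deg_le0 _); rewrite !addr0 E0 addr0. Qed.

Lemma ED p q : deg_le p 4 -> deg_le q 4 -> E (p + q) = E p + E q.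
Proof. by move=> hp hq; have := @E_lin 1 p q hp hq; rewrite scale1r mul1r. Qed.

Lemma EB p q : deg_le p 4 -> deg_le q 4 -> E (p - q) = E p - E q.
Proof. by move=> hp hq; rewrite -scaleN1r ED ?EZ ?mulN1r //; apply: deg_leZ. Qed.

Lemma E_sum (I : Type) (s : seq I) (F : I -> P) :
  (forall i, deg_le (F i) 4) -> E (\sum_(i <- s) F i) = \sum_(i <- s) E (F i).
Proof.
move=> h; elim: s => [|i s ih]; first by rewrite !big_nil E0.
rewrite !big_cons ED ?ih //; exact: deg_le_sum.
Qed.

Lemma E_sq q : deg_le q 2 -> 0 <= E (q ^+ 2).
Proof. by case: hE => _ _ h hq; rewrite expr2; apply: h. Qed.

Lemma sos_list_deg (s : seq (R * P)) :
  all (fun cq => (0 <= cq.1) && deg_le cq.2 2) s ->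
  deg_le (\sum_(cq <- s) cq.1 *: cq.2 ^+ 2) 4.
Proof.
elim: s => [|[c q] s ih]; first by rewrite big_nil deg_le0.
rewrite /= => /andP [/andP [c0 hq] hs]; rewrite big_cons /=.
apply: deg_leD; last exact: ih.
apply: deg_leZ; exact: (deg_leX 2 hq).
Qed.

Lemma sos_deg p : sos2 p -> deg_le p 4.
Proof. by move=> [s [hs ->]]; apply: sos_list_deg. Qed.

Lemma E_sos p : sos2 p -> 0 <= E p.
Proof.
move=> [s [hs ->]]; elim: s hs => [|[c q] s ih]; first by rewrite big_nil E0.
rewrite /= => /andP [/andP [c0 hq] hs]; rewrite big_cons /=.
rewrite E_lin ?(deg_leX 2 hq) ?sos_list_deg //.
apply: addr_ge0; last exact: ih.
apply: mulr_ge0 => //; exact: E_sq.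
Qed.
End Deg.
Section Cube.
Variable R : realType.
Variable U : finType.
Local Notation P := (fpoly R U).
Variable n : nat.
Local Notation coord := (@Defs.coord R n).
Local Notation chi := (@Defs.chi R n).

Definition flip (i0 : 'I_n) (x : cube n) : cube n :=
  [ffun j => if j == i0 then ~~ x j else x j].

Lemma flipK i0 : involutive (flip i0).
Proof.
move=> x; apply/ffunP => j; rewrite !ffunE; case: (j == i0) => //; exact: negbK.
Qed.

Lemma coord_flip i0 x : coord (flip i0 x) i0 = - coord x i0.
Proof. rewrite /Defs.coord ffunE eqxx; case: (x i0) => /=; by rewrite ?opprK. Qed.

Lemma coord_flipN i0 x j : j != i0 -> coord (flip i0 x) j = coord x j.
Proof. by move=> /negbTE h; rewrite /Defs.coord ffunE h. Qed.

Lemma chi_flip i0 x (al : {set 'I_n}) : i0 \notin al -> chi al (flip i0 x) = chi al x.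
Proof.
move=> h; apply: eq_bigr => i hi; apply: coord_flipN.
by apply: contraNneq h => <-.
Qed.

Lemma coord_sq x i : coord x i * coord x i = 1.
Proof. rewrite /Defs.coord; case: (x i); by rewrite ?mulrNN mulr1. Qed.

Lemma sum_odd0 i0 (G : cube n -> P) : (forall x, G (flip i0 x) = G x) ->
  \sum_x coord x i0 *: G x = 0.
Proof.
move=> hG; set S := \sum_x _.
have hS : S = - S.
  rewrite {1}/S (reindex_inj (can_inj (flipK i0))) /= -sumrN.
  by apply: eq_bigr => x _; rewrite coord_flip hG scaleNr.
have : S *+ 2 = 0 by rewrite mulr2n {1}hS addNr.
by rewrite -scaler_nat => /eqP; rewrite scaler_eq0 pnatr_eq0 /= => /eqP.
Qed.

Definition gfunc (a : {set 'I_n} -> P) (x : cube n) : P :=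
  \sum_(al : {set 'I_n}) chi al x *: a al.

Local Notation gfun := gfunc.
Definition a0 (i0 : 'I_n) (a : {set 'I_n} -> P) (al : {set 'I_n}) := if i0 \in al then 0 else a al.
Definition a1 (i0 : 'I_n) (a : {set 'I_n} -> P) (al : {set 'I_n}) := if i0 \in al then 0 else a (i0 |: al).

Lemma chiU1 (i0 : 'I_n) (al : {set 'I_n}) x : i0 \notin al -> chi (i0 |: al) x = coord x i0 * chi al x.
Proof. by move=> h; rewrite /Defs.chi big_setU1. Qed.

Lemma gfun_split i0 (a : {set 'I_n} -> P) x :
  gfun a x = gfun (a0 i0 a) x + coord x i0 *: gfun (a1 i0 a) x.
Proof.
rewrite /gfunc.
rewrite (bigID (fun al : {set 'I_n} => i0 \in al)) /= addrC; congr (_ + _).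
  rewrite [RHS](bigID (fun al : {set 'I_n} => i0 \in al)) /= [X in _ = X + _]big1 ?add0r; last first.
    by move=> al h; rewrite /a0 h scaler0.
  by apply: eq_bigr => al h; rewrite /a0 (negbTE h).
rewrite (reindex_onto (fun b : {set 'I_n} => i0 |: b) (fun al : {set 'I_n} => al :\ i0)) /=; last first.
  by move=> al h; rewrite setD1K.
rewrite scaler_sumr [RHS](bigID (fun al : {set 'I_n} => i0 \in al)) /= [X in _ = X + _]big1 ?add0r; last first.
  by move=> al h; rewrite /a1 h !scaler0.
apply: eq_big => al.
  rewrite setU11 /=; case: (boolP (i0 \in al)) => h.
    apply/negbTE; apply/eqP => e; move: h; rewrite -e; by rewrite setD11.
  by rewrite setU1K // eqxx.
move=> /andP [_ /eqP e].
have h : i0 \notin al by rewrite -e setD11.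
by rewrite /a1 (negbTE h) scalerA chiU1.
Qed.

Lemma gfun_flip i0 (a : {set 'I_n} -> P) x : (forall al : {set 'I_n}, i0 \in al -> a al = 0) ->
  gfun a (flip i0 x) = gfun a x.
Proof.
move=> h; apply: eq_bigr => al _; case: (boolP (i0 \in al)) => hi.
  by rewrite h // !scaler0.
by rewrite chi_flip.
Qed.

Lemma a0_0 i0 a (al : {set 'I_n}) : i0 \in al -> a0 i0 a al = 0.
Proof. by rewrite /a0 => ->. Qed.
Lemma a1_0 i0 a (al : {set 'I_n}) : i0 \in al -> a1 i0 a al = 0.
Proof. by rewrite /a1 => ->. Qed.

Lemma gfun0 (a : {set 'I_n} -> P) x : (forall al : {set 'I_n}, a al = 0) -> gfun a x = 0.
Proof. by move=> h; apply: big1 => al _; rewrite h scaler0. Qed.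

Lemma gfun_deg (a : {set 'I_n} -> P) x : (forall al : {set 'I_n}, deg_le (a al) 1) -> deg_le (gfun a x) 1.
Proof. move=> h; apply: deg_le_sum => al _; exact: deg_leZ. Qed.

End Cube.

Section Claim.
Variable R : realType.
Variable U : finType.
Local Notation P := (fpoly R U).
Variable n : nat.
Local Notation coord := (@Defs.coord R n).
Local Notation chi := (@Defs.chi R n).
Local Notation gfun := (@gfunc R U n).

Definition Sqf (g : cube n -> P) := \sum_x g x ^+ 2.
Local Notation Sq := Sqf.
Definition Iqf (g k : cube n -> P) := \sum_x g x ^+ 2 * k x ^+ 2.
Local Notation Iq := Iqf.

Lemma sq_split (A B : P) x i0 :
  (A + coord x i0 *: B) ^+ 2 = A ^+ 2 + B ^+ 2 + coord x i0 *: (A * B *+ 2).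
Proof. rewrite /Defs.coord; case: (x i0); rewrite ?scaleN1r ?scale1r; ring. Qed.

Lemma quad_split (A B C D : P) x i0 :
  (A + coord x i0 *: B) ^+ 2 * (C + coord x i0 *: D) ^+ 2 =
  (A ^+ 2 + B ^+ 2) * (C ^+ 2 + D ^+ 2) + A * B * C * D *+ 4 +
  coord x i0 *: ((A * B * (C ^+ 2 + D ^+ 2) + C * D * (A ^+ 2 + B ^+ 2)) *+ 2).
Proof. rewrite /Defs.coord; case: (x i0); rewrite ?scaleN1r ?scale1r; ring. Qed.

Lemma Sq_split i0 a :
  Sq (gfun a) = Sq (gfun (a0 i0 a)) + Sq (gfun (a1 i0 a)).
Proof.
rewrite /Sqf; under eq_bigr do rewrite (gfun_split i0) sq_split.
rewrite big_split /= sum_odd0 ?addr0 ?big_split //.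
move=> x /=; rewrite (gfun_flip (a := a0 i0 a)); last exact: a0_0.
by rewrite (gfun_flip (a := a1 i0 a)); last exact: a1_0.
Qed.

Lemma Iq_split i0 a b :
  Iq (gfun a) (gfun b) =
  Iq (gfun (a0 i0 a)) (gfun (a0 i0 b)) + Iq (gfun (a0 i0 a)) (gfun (a1 i0 b)) +
  Iq (gfun (a1 i0 a)) (gfun (a0 i0 b)) + Iq (gfun (a1 i0 a)) (gfun (a1 i0 b)) +
  (\sum_x gfun (a0 i0 a) x * gfun (a1 i0 a) x * gfun (a0 i0 b) x * gfun (a1 i0 b) x) *+ 4.
Proof.
rewrite /Iqf; under eq_bigr do rewrite (gfun_split i0 a) (gfun_split i0 b) quad_split.
rewrite big_split /= sum_odd0 ?addr0; last first.
  move=> x /=; rewrite (gfun_flip (a := a0 i0 a)); last exact: a0_0.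
  rewrite (gfun_flip (a := a1 i0 a)); last exact: a1_0.
  rewrite (gfun_flip (a := a0 i0 b)); last exact: a0_0.
  by rewrite (gfun_flip (a := a1 i0 b)); last exact: a1_0.
rewrite -sumrMnl -!big_split /=; apply: eq_bigr => x _; ring.
Qed.

Lemma cross_sum (g0 g1 k0 k1 : cube n -> P) :
  \sum_x (g0 x * k1 x - g1 x * k0 x) ^+ 2 =
  Iq g0 k1 + Iq g1 k0 - (\sum_x g0 x * g1 x * k0 x * k1 x) *+ 2.
Proof.
rewrite /Iqf -sumrMnl -big_split -sumrB /=; apply: eq_bigr => x _; ring.
Qed.

End Claim.

Section Induction.
Variable R : realType.
Variable U : finType.
Local Notation P := (fpoly R U).
Variable n : nat.
Local Notation gfun := (@gfunc R U n).
Local Notation Sq := (@Sqf R U n).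
Local Notation Iq := (@Iqf R U n).
Local Notation N := #|{: cube n}|.

Lemma Sq0 (k : cube n -> P) : (forall x, k x = 0) -> Sq k = 0.
Proof. by move=> h; apply: big1 => x _; rewrite h expr0n. Qed.
Lemma Iq0r (g k : cube n -> P) : (forall x, k x = 0) -> Iq g k = 0.
Proof. by move=> h; apply: big1 => x _; rewrite h expr0n mulr0. Qed.
Lemma Iq0l (g k : cube n -> P) : (forall x, g x = 0) -> Iq g k = 0.
Proof. by move=> h; apply: big1 => x _; rewrite h expr0n mul0r. Qed.

Lemma Sq_ge (g : cube n -> P) : (forall x, deg_le (g x) 1) -> True.
Proof. done. Qed.

Definition claimP (m : nat) := forall (d1 d2 : nat) (a b : {set 'I_n} -> P),
  (forall al : {set 'I_n}, deg_le (a al) 1) -> (forall al : {set 'I_n}, deg_le (b al) 1) ->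
  (forall (al : {set 'I_n}) (i : 'I_n), i \in al -> (m <= i)%N -> a al = 0) ->
  (forall (al : {set 'I_n}) (i : 'I_n), i \in al -> (m <= i)%N -> b al = 0) ->
  (forall al : {set 'I_n}, (d1 < #|al|)%N -> a al = 0) ->
  (forall al : {set 'I_n}, (d2 < #|al|)%N -> b al = 0) ->
  sos2 (Sq (gfun a) * Sq (gfun b) *+ 3 ^ (d1 + d2) - Iq (gfun a) (gfun b) *+ N).

Lemma gfun_base (a : {set 'I_n} -> P) x :
  (forall (al : {set 'I_n}) (i : 'I_n), i \in al -> (0 <= i)%N -> a al = 0) -> gfun a x = a set0.
Proof.
move=> h; rewrite /gfunc (bigD1 set0) //= big1.
  by rewrite addr0 /Defs.chi big_set0 scale1r.
move=> al hal; case: (set_0Vmem al) => [e|[i hi]]; first by rewrite e eqxx in hal.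
by rewrite (h al i hi) // scaler0.
Qed.

Lemma claim0 : claimP 0.
Proof.
move=> d1 d2 a b ha hb sa sb _ _.
have ga : forall x, gfun a x = a set0 by move=> x; apply: gfun_base.
have gb : forall x, gfun b x = b set0 by move=> x; apply: gfun_base.
rewrite /Sqf /Iqf.
under eq_bigr do rewrite ga.
under [X in _ * X]eq_bigr do rewrite gb.
under [X in _ - X *+ _]eq_bigr do rewrite ga gb.
rewrite !sumr_const.
have e : (3 ^ (d1 + d2) = (3 ^ (d1 + d2)).-1.+1)%N by rewrite prednK // expn_gt0.
set A := a set0; set B := b set0; set k := (3 ^ (d1 + d2)).-1.
apply: (@sos_eq _ _ _ ((A * B) ^+ 2 *+ (N * N * k))); last first.
  apply: sosMn; apply: sos_sq; exact: (deg_leM (ha _) (hb _)).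
rewrite e; ring.
Qed.


Lemma claimS m (hm : (m.+1 <= n)%N) : claimP m -> claimP m.+1.
Proof.
move=> IH d1 d2 a b ha hb sa sb da db.
pose i0 : 'I_n := Ordinal hm.
have neq (al : {set 'I_n}) (i : 'I_n) : i0 \notin al -> i \in al -> (m <= i)%N -> (m.+1 <= i)%N.
  move=> hn hi hmi; rewrite ltn_neqAle hmi andbT; apply/eqP => e.
  have : i = i0 by apply: val_inj; rewrite /= -e.
  by move=> ei; rewrite -ei hi in hn.
have s0 (c : {set 'I_n} -> P) : (forall (al : {set 'I_n}) (i : 'I_n), i \in al -> (m.+1 <= i)%N -> c al = 0) ->
    forall (al : {set 'I_n}) (i : 'I_n), i \in al -> (m <= i)%N -> a0 i0 c al = 0.
  move=> hc al i hi hmi; rewrite /a0; case: ifPn => // hn.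
  exact: (hc al i hi (neq al i hn hi hmi)).
have s1 (c : {set 'I_n} -> P) : (forall (al : {set 'I_n}) (i : 'I_n), i \in al -> (m.+1 <= i)%N -> c al = 0) ->
    forall (al : {set 'I_n}) (i : 'I_n), i \in al -> (m <= i)%N -> a1 i0 c al = 0.
  move=> hc al i hi hmi; rewrite /a1; case: ifPn => // hn.
  by apply: (hc _ i); [rewrite setU1r | exact: (neq al i hn hi hmi)].
have e0 (c : {set 'I_n} -> P) d : (forall al : {set 'I_n}, (d < #|al|)%N -> c al = 0) ->
    forall al : {set 'I_n}, (d < #|al|)%N -> a0 i0 c al = 0.
  by move=> hc al hal; rewrite /a0; case: ifPn => // _; apply: hc.
have e1 (c : {set 'I_n} -> P) d : (forall al : {set 'I_n}, (d < #|al|)%N -> c al = 0) ->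
    forall al : {set 'I_n}, (d <= #|al|)%N -> a1 i0 c al = 0.
  move=> hc al hal; rewrite /a1; case: ifPn => // hn; apply: hc.
  by rewrite cardsU1 hn add1n ltnS.
have g0 (c : {set 'I_n} -> P) : (forall al : {set 'I_n}, deg_le (c al) 1) ->
    forall al : {set 'I_n}, deg_le (a0 i0 c al) 1.
  by move=> hc al; rewrite /a0; case: ifP => _ //; exact: deg_le0.
have g1 (c : {set 'I_n} -> P) : (forall al : {set 'I_n}, deg_le (c al) 1) ->
    forall al : {set 'I_n}, deg_le (a1 i0 c al) 1.
  by move=> hc al; rewrite /a1; case: ifP => _ //; exact: deg_le0.
have h1 := IH d1 d2 _ _ (g0 _ ha) (g0 _ hb) (s0 _ sa) (s0 _ sb) (e0 _ _ da) (e0 _ _ db).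
have h4 := IH d1 d2 _ _ (g1 _ ha) (g1 _ hb) (s1 _ sa) (s1 _ sb)
  (fun al h => e1 _ _ da al (ltnW h)) (fun al h => e1 _ _ db al (ltnW h)).
have h2 : sos2 (Sq (gfun (a0 i0 a)) * Sq (gfun (a1 i0 b)) *+ 3 ^ (d1 + d2)
               - Iq (gfun (a0 i0 a)) (gfun (a1 i0 b)) *+ (3 * N)).
  case: d2 db {h1 h4} => [|d] db.
    have z : forall x, gfun (a1 i0 b) x = 0.
      by move=> x; apply: gfun0 => al; apply: (e1 _ _ db).
    by rewrite (Sq0 z) (Iq0r _ z) mulr0 !mul0rn subr0; exact: sos0.
  have := IH d1 d _ _ (g0 _ ha) (g1 _ hb) (s0 _ sa) (s1 _ sb) (e0 _ _ da) (e1 _ _ db).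
  move=> /(sosMn 3); apply: sos_eq; rewrite addnS expnS; ring.
have h3 : sos2 (Sq (gfun (a1 i0 a)) * Sq (gfun (a0 i0 b)) *+ 3 ^ (d1 + d2)
               - Iq (gfun (a1 i0 a)) (gfun (a0 i0 b)) *+ (3 * N)).
  case: d1 da {h1 h4 h2} => [|d] da.
    have z : forall x, gfun (a1 i0 a) x = 0.
      by move=> x; apply: gfun0 => al; apply: (e1 _ _ da).
    by rewrite (Sq0 z) (Iq0l _ z) mul0r !mul0rn subr0; exact: sos0.
  have := IH d d2 _ _ (g1 _ ha) (g0 _ hb) (s1 _ sa) (s0 _ sb) (e1 _ _ da) (e0 _ _ db).
  move=> /(sosMn 3); apply: sos_eq; rewrite addSn expnS; ring.
have h5 : sos2 ((\sum_x (gfun (a0 i0 a) x * gfun (a1 i0 b) x - gfun (a1 i0 a) x * gfun (a0 i0 b) x) ^+ 2) *+ (2 * N)).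
  apply: sosMn; apply: sos_sum => x _; apply: sos_sq.
  apply: deg_leB; apply: (deg_leM (a := 1) (b := 1)); apply: gfun_deg; auto.
rewrite cross_sum in h5.
apply: (sos_eq _ (sosD (sosD (sosD (sosD h1 h2) h3) h4) h5)).
rewrite (Sq_split i0 a) (Sq_split i0 b) (Iq_split i0 a b); ring.
Qed.

Lemma claimN : claimP n.
Proof.
have : forall m, (m <= n)%N -> claimP m.
  elim=> [_|m ih hm]; first exact: claim0.
  by apply: claimS => //; apply: ih; apply: ltnW.
by apply.
Qed.

End Induction.

Section Fourier.
Variable R : realType.
Variable n : nat.
Local Notation U := (cube n).
Local Notation P := (fpoly R U).
Local Notation coord := (@Defs.coord R n).
Local Notation chi := (@Defs.chi R n).
Local Notation gfun := (@gfunc R U n).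
Local Notation N := #|{: cube n}|.

Lemma chi_flip_in i (al : {set 'I_n}) x : i \in al -> chi al (flip i x) = - chi al x.
Proof.
move=> hi; rewrite /Defs.chi !(big_setD1 i hi) /=.
have h : i \notin al :\ i by rewrite setD11.
by rewrite -/(chi _ _) -/(chi _ _) chi_flip // coord_flip mulNr.
Qed.

Lemma chi_sq (al : {set 'I_n}) x : chi al x * chi al x = 1.
Proof. rewrite /Defs.chi -big_split /=; apply: big1 => i _; exact: coord_sq. Qed.

Lemma chi_orth (al be : {set 'I_n}) :
  \sum_(x : cube n) chi al x * chi be x = if al == be then N%:R else 0.
Proof.
case: eqVneq => [<-|ne].
  by under eq_bigr do rewrite chi_sq; rewrite sumr_const.
have [i hi] : exists i, (i \in al) != (i \in be).
  apply/existsP; move: ne; apply: contraNT; rewrite negb_exists => /forallP h.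
  by apply/eqP/setP => i; move: (h i); rewrite negbK => /eqP.
set S := \sum_x _.
have hS : S = - S.
  rewrite {1}/S (reindex_inj (can_inj (flipK i))) /= -sumrN.
  apply: eq_bigr => x _.
  case: (boolP (i \in al)) hi => ha; case: (boolP (i \in be)) => hb //= _.
    by rewrite chi_flip_in // chi_flip // mulNr.
  by rewrite chi_flip // chi_flip_in // mulrN.
have : S *+ 2 = 0 by rewrite mulr2n {1}hS addNr.
by rewrite -mulr_natr => /eqP; rewrite mulf_eq0 pnatr_eq0 /= orbF => /eqP.
Qed.

Lemma sum_gfun_sq (c : {set 'I_n} -> P) :
  \sum_(u : U) gfun c u ^+ 2 = N%:R *: \sum_al c al ^+ 2.
Proof.
transitivity (\sum_(u : U) \sum_al \sum_be (chi al u * chi be u) *: (c al * c be)).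
  apply: eq_bigr => u _; rewrite /gfunc expr2 mulr_suml; apply: eq_bigr => al _.
  rewrite mulr_sumr; apply: eq_bigr => be _.
  by rewrite -scalerAl -scalerAr scalerA.
rewrite exchange_big /= scaler_sumr; apply: eq_bigr => al _.
rewrite exchange_big /= (bigD1 al) //= [X in _ + X]big1 ?addr0.
  by rewrite -scaler_suml chi_orth eqxx expr2.
move=> be hbe.
by rewrite -scaler_suml chi_orth eq_sym (negbTE hbe) scale0r.
Qed.

Lemma sum_fvar_gfun (c : {set 'I_n} -> P) :
  \sum_(u : U) fvar R u * gfun c u = \sum_al c al * \sum_(u : U) chi al u *: fvar R u.
Proof.
rewrite /gfunc; under eq_bigr do rewrite mulr_sumr.
rewrite exchange_big /=; apply: eq_bigr => al _; rewrite mulr_sumr.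
by apply: eq_bigr => u _; rewrite -!scalerAr mulrC.
Qed.

End Fourier.

Section Norm.
Variable R : realType.
Variable U : finType.
Local Notation P := (fpoly R U).
Variable E : P -> R.
Hypothesis hE : pseudo_expectation 4 E.

Lemma sq_shift (p : P) (s : R) :
  (p + s *: 1) ^+ 2 = p ^+ 2 + (s *+ 2) *: p + s ^+ 2 *: 1.
Proof. by rewrite sqrrD -scalerAr mulr1 scalerMnl exprZn expr1n. Qed.

Lemma E1 : E 1 = 1.
Proof. by case: hE. Qed.

Lemma E_shift (p : P) (s : R) : deg_le p 2 ->
  E ((p + s *: 1) ^+ 2) = E (p ^+ 2) + (s *+ 2) * E p + s ^+ 2.
Proof.
move=> hp; have hp4 : deg_le p 4 by apply: deg_leW hp.
have hp2 : deg_le (p ^+ 2) 4 by apply: (deg_leX 2 hp).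
rewrite sq_shift !ED // ?EZ ?E1 ?mulr1 //; try by apply: deg_leZ; rewrite ?deg_le1.
  by apply: deg_le1.
by apply: deg_leD => //; apply: deg_leZ.
Qed.

Lemma E_unit (p : P) : deg_le p 2 -> E (p ^+ 2) = 0 -> E ((p + 1) ^+ 2) = 1.
Proof.
move=> hp h0.
have ep : E p = 0.
  have := E_sq hE (deg_leD hp (deg_leZ (- E p) (@deg_le1 R U 2))).
  rewrite E_shift // h0 add0r => h.
  move: h; rewrite mulNrn mulNr sqrrN -mulr_natl; set e := E p => h.
  have h' : e ^+ 2 <= 0 by rewrite expr2 in h *; nra.
  by apply/eqP; rewrite -sqrf_eq0 eq_le h' sqr_ge0.
by have := E_shift 1 hp; rewrite scale1r h0 ep mulr0 !add0r expr1n.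
Qed.

End Norm.

Section Main.
Variable R : realType.
Variable n d : nat.
Local Notation U := (cube n).
Local Notation P := (fpoly R U).
Local Notation chi := (@Defs.chi R n).
Local Notation gfun := (@gfunc R U n).
Local Notation N := #|{: cube n}|.

Definition chat (al : {set 'I_n}) : P := \sum_(u : U) ((N%:R)^-1 * chi al u) *: fvar R u.
Definition cc (al : {set 'I_n}) : P := if (#|al| <= d)%N then chat al else 0.

Lemma N_gt0 : (0 < N)%N.
Proof. by apply/card_gt0P; exists [ffun=> false]. Qed.

Lemma Nr_neq0 : (N%:R : R) != 0.
Proof. by rewrite pnatr_eq0 -lt0n N_gt0. Qed.

Lemma fourier_e (u : U) (al : {set 'I_n}) :
  @fourier R n R^o (fun u' => (u' == u)%:R) al = (N%:R)^-1 * chi al u.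
Proof.
rewrite /fourier (bigD1 u) //= big1 ?addr0; last first.
  by move=> x hx; rewrite (negbTE hx) /= [_ *: _]mulr0.
by rewrite eqxx -[LHS]/(#|U|%:R^-1 * (chi al u * 1)) mulr1.
Qed.

Lemma F_eq (v : U) : formal_apply (@lowdeg R n d) v = gfun cc v.
Proof.
rewrite /formal_apply /lowdeg.
under eq_bigr do rewrite scaler_suml.
rewrite exchange_big /= /gfunc [LHS]big_mkcond /=; apply: eq_bigr => al _.
rewrite /cc; case: ifP => _; last by rewrite scaler0.
rewrite /chat scaler_sumr; apply: eq_bigr => u _.
by rewrite fourier_e scalerA mulrC.
Qed.

Lemma cc_deg al : deg_le (cc al) 1.
Proof.
rewrite /cc; case: ifP => _; last exact: deg_le0.
apply: deg_le_sum => u _; apply: deg_leZ; exact: deg_fvar.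
Qed.

Lemma chat_sum al : \sum_(u : U) chi al u *: fvar R u = N%:R *: chat al.
Proof.
rewrite /chat scaler_sumr; apply: eq_bigr => u _.
by rewrite scalerA mulrA divff ?mul1r // Nr_neq0.
Qed.

Lemma cross_eq : \sum_(u : U) fvar R u * gfun cc u = \sum_(u : U) gfun cc u ^+ 2.
Proof.
rewrite sum_fvar_gfun sum_gfun_sq scaler_sumr; apply: eq_bigr => al _.
rewrite chat_sum -scalerAr; congr (_ *: _).
by rewrite /cc; case: ifP => _; rewrite expr2 ?mul0r.
Qed.

End Main.

Theorem theorem2p2 (R : realType) (n d : nat) (hdn : (d <= n)%N) (t : R) :
  tensor_sdp_value 4 (@lowdeg R n d) t -> t <= 9 ^+ d.
Proof.
move=> [E [hE hn ->]].
pose c := @cc R n d.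
pose g := @gfunc R (cube n) n c.
have hg : forall v, deg_le (g v) 1 by move=> v; apply: gfun_deg; exact: cc_deg.
pose S := \sum_(u : cube n) fvar R u ^+ 2.
pose Q := \sum_(u : cube n) g u ^+ 2.
pose Iv := \sum_(u : cube n) g u ^+ 2 * g u ^+ 2.
have hC : sos2 (Q * Q *+ 3 ^ (d + d) - Iv *+ #|{: cube n}|).
  apply: (@claimN R (cube n) n d d c c) => //; try exact: cc_deg.
  - by move=> al i _; rewrite leqNgt ltn_ord.
  - by move=> al i _; rewrite leqNgt ltn_ord.
  - by move=> al h; rewrite /c /cc leqNgt h.
  - by move=> al h; rewrite /c /cc leqNgt h.
have hZ : S - Q = \sum_(u : cube n) (fvar R u - g u) ^+ 2.
  have := @cross_eq R n d; rewrite -/c -/g => hx.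
  transitivity (S - (\sum_(u : cube n) fvar R u * g u) *+ 2 + Q).
    by rewrite hx -/Q; ring.
  rewrite /S /Q -sumrMnl -sumrB -big_split /=; apply: eq_bigr => u _; ring.
have hSQ : sos2 (S * S - Q * Q).
  apply: (sos_eq (q := (S - Q) * (S - Q) + ((S - Q) * Q) *+ 2)); first ring.
  rewrite hZ; apply: sosD; first by apply: sos_prod => u; apply: deg_leB => //; exact: deg_fvar.
  by apply: sosMn; apply: sos_prod => u //; apply: deg_leB => //; exact: deg_fvar.
have dQ : deg_le Q 2 by apply: deg_le_sum => u _; exact: (deg_leX 2 (hg u)).
have dS : deg_le S 2.
  by apply: deg_le_sum => u _; exact: (deg_leX 2 (deg_fvar R u)).
have dQQ : deg_le (Q * Q) 4 by exact: (deg_leM dQ dQ).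
have dSS : deg_le (S * S) 4 by exact: (deg_leM dS dS).
have dI : deg_le Iv 4.
  by apply: deg_le_sum => u _; exact: (deg_leM (deg_leX 2 (hg u)) (deg_leX 2 (hg u))).
have EMn (p : fpoly R (cube n)) k : deg_le p 4 -> E (p *+ k) = k%:R * E p.
  by move=> hp; rewrite -scaler_nat EZ.
have h1 := E_sos hE hC; rewrite EB ?EMn // in h1; last 2 first.
  - exact: deg_leMn.
  - exact: deg_leMn.
have h2 := E_sos hE hSQ; rewrite EB // in h2.
have h3 : E (norm2sq R (U := cube n) ^+ 2) = 1.
  have := @E_unit R (cube n) E hE (norm2sq R - 1).
  rewrite subrK; apply => //.
  apply: deg_leB; last exact: deg_le1.
  by rewrite /norm2sq; apply: deg_leZ.
rewrite /norm2sq -/S exprZn EZ in h3; last exact: (deg_leX 2 dS).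
rewrite [S ^+ 2]expr2 in h3.
have ht : norm4pow4 (@lowdeg R n d) = (#|{: cube n}|%:R)^-1 *: Iv.
  rewrite /norm4pow4; congr (_ *: _); apply: eq_bigr => v _.
  by rewrite F_eq -/c -/g -exprD.
rewrite ht EZ //.
have K0 : (0 : R) < #|{: cube n}|%:R by rewrite ltr0n N_gt0.
have c0 : (0 : R) <= 9 ^+ d by rewrite exprn_ge0.
have e9 : (3 ^ (d + d))%:R = 9 ^+ d :> R by rewrite expnD -expnMn natrX.
rewrite e9 in h1.
move: h1 h2 h3 K0 c0; rewrite /S.
set K := (#|{: cube n}|%:R : R); set q := E (Q * Q); set s := E (_ * _); set x := E Iv.
set C := 9 ^+ d => h1 h2 h3 K0 c0.
have hs : K ^+ 2 * (K^-1 ^+ 2 * s) = s.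
  by rewrite mulrA -exprMn mulfV ?expr1n ?mul1r // gt_eqF.
rewrite h3 mulr1 in hs.
rewrite ler_pdivrMl //.
have h4 : C * q <= C * s by rewrite ler_wpM2l // -subr_ge0.
rewrite -hs in h4; nra.
exact: hE.
Qed.
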